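(* Let $f:E\to\mathbb{R}$ be $L$-smooth and $\gamma$-weakly-quasi-convex with respect to a minimizer $x_*$, for some $\gamma\in(0,1]$. Then the iterates of Algorithm AGMsDR (either option) started at $x^0$ satisfy, for every $k\ge 0$, $$A_k\big(f(x^k)-f(x_* )\big)\le(1-\gamma)A_k\big(f(x^0)-f(x_* )\big)+V(x_*,x^0).$$
   Context: $E$ is a finite-dimensional real vector space with a norm $\|\cdot\|$; $E^*$ is its dual, $\langle g,x\rangle$ denotes the value of $g\in E^*$ at $x\in E$, and $\|g\|_*=\max\{\langle g,x\rangle:\|x\|\le 1\}$. For $g\in E^*$, $g^{\#}$ denotes a (fixed) element $s\in E$ with $\|s\|\le 1$ and $\langle g,s\rangle=\|g\|_*$. A prox-function $d:E\to\mathbb{R}$ is continuously differentiable, convex, $1$-strongly convex with respect to $\|\cdot\|$ (i.e. $d(y)-d(x)-\langle\nabla d(x),y-x\rangle\ge\frac12\|y-x\|^2$ for all $x,y\in E$) and satisfies $\min_E d=0$; its Bregman divergence is $V(x,z)=d(x)-d(z)-\langle\nabla d(z),x-z\rangle$. A function $f:E\to\mathbb{R}$ is $L$-smooth ($L>0$) if it is continuously differentiable and $\|\nabla f(x)-\nabla f(y)\|_*\le L\|x-y\|$ for all $x,y\in E$. A differentiable $f$ with a minimizer $x_*$ is $\gamma$-weakly-quasi-convex ($\gamma\in(0,1]$) if $\gamma(f(x)-f(x_* ))\le\langle\nabla f(x),x-x_*\rangle$ for all $x\in E$. Algorithm AGMsDR (input $x^0\in E$, and $L$ for Option (a)): set $A_0=0$,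 $v^0=x^0$, $\psi_0(x)=V(x,x^0)$. For $k=0,1,2,\dots$: 1. Choose $\beta_k\in\arg\min_{\beta\in[0,1]} f(v^k+\beta(x^k-v^k))$ (a global minimizer over the interval) and set $y^k=v^k+\beta_k(x^k-v^k)$. 2. Option (a): $x^{k+1}\in\arg\min_{x\in E}\{f(y^k)+\langle\nabla f(y^k),x-y^k\rangle+\frac L2\|x-y^k\|^2\}$, and $a_{k+1}>0$ solves $\frac{a_{k+1}^2}{A_k+a_{k+1}}=\frac1L$. Option (b): $h_{k+1}\in\arg\min_{h\ge0} f(y^k-h(\nabla f(y^k))^{\#})$, $x^{k+1}=y^k-h_{k+1}(\nabla f(y^k))^{\#}$, and $a_{k+1}$ is the largest solution of $f(y^k)-\frac{a_{k+1}^2}{2(A_k+a_{k+1})}\|\nabla f(y^k)\|_*^2=f(x^{k+1})$. 3. $A_{k+1}=A_k+a_{k+1}$; $\psi_{k+1}(x)=\psi_k(x)+a_{k+1}\{f(y^k)+\langle\nabla f(y^k),x-y^k\rangle\}$; $v^{k+1}=\arg\min_{x\in E}\psi_{k+1}(x)$. It is assumed that all the minima in the algorithm are attained, and that $\nabla f(y^k)\neq 0$ for all iterations considered (otherwise $y^k$ is a stationary point and the method stops). *)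

(* Defs.v *)
From Stdlib Require Import Reals.
From mathcomp Require Import ssreflect ssrfun ssrbool eqtype ssrnat fintype bigop.
Set Implicit Arguments.
Unset Strict Implicit.
Open Scope R_scope.

(* The finite-dimensional space E is modelled as R^n = 'I_n -> R.
   Its dual E^* is identified with R^n through the standard pairing. *)
Definition E (n : nat) := 'I_n -> R.

Definition vadd {n} (x y : E n) : E n := fun i => x i + y i.
Definition vsub {n} (x y : E n) : E n := fun i => x i - y i.
Definition vscal {n} (c : R) (x : E n) : E n := fun i => c * x i.
Definition vzero {n} : E n := fun _ => 0.

Definition pair {n} (g x : E n) : R := \big[Rplus/0]_(i < n) (g i * x i).

Definition is_norm {n} (nrm : E n -> R) : Prop :=
  (forall x, 0 <= nrm x) /\
  (forall x, nrm x = 0 -> forall i, x i = 0) /\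
  (forall c x, nrm (vscal c x) = Rabs c * nrm x) /\
  (forall x y, nrm (vadd x y) <= nrm x + nrm y).

Definition is_dual_norm {n} (nrm dnorm : E n -> R) : Prop :=
  forall g, (exists x, nrm x <= 1 /\ pair g x = dnorm g) /\
            (forall x, nrm x <= 1 -> pair g x <= dnorm g).

Definition is_sharp {n} (nrm dnorm : E n -> R) (sharp : E n -> E n) : Prop :=
  forall g, nrm (sharp g) <= 1 /\ pair g (sharp g) = dnorm g.

Definition has_gradient {n} (nrm : E n -> R) (f : E n -> R) (g : E n -> E n) : Prop :=
  forall x eps, 0 < eps -> exists delta, 0 < delta /\
    forall h, nrm h < delta ->
      Rabs (f (vadd x h) - f x - pair (g x) h) <= eps * nrm h.

Definition C1_with_gradient {n} (nrm dnorm : E n -> R) (f : E n -> R) (g : E n -> E n) : Prop :=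
  has_gradient nrm f g /\
  (forall x eps, 0 < eps -> exists delta, 0 < delta /\
     forall z, nrm (vsub z x) < delta -> dnorm (vsub (g z) (g x)) < eps).

Definition convex {n} (f : E n -> R) : Prop :=
  forall x y t, 0 <= t <= 1 ->
    f (vadd (vscal t x) (vscal (1 - t) y)) <= t * f x + (1 - t) * f y.

Definition prox_function {n} (nrm dnorm : E n -> R) (d : E n -> R) (gd : E n -> E n) : Prop :=
  C1_with_gradient nrm dnorm d gd /\ convex d /\
  (forall x y, d y - d x - pair (gd x) (vsub y x) >= / 2 * (nrm (vsub y x)) ^ 2) /\
  (exists x, d x = 0) /\ (forall x, 0 <= d x).

Definition bregman {n} (d : E n -> R) (gd : E n -> E n) (x z : E n) : R :=
  d x - d z - pair (gd z) (vsub x z).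

Definition L_smooth {n} (nrm dnorm : E n -> R) (L : R) (f : E n -> R) (gf : E n -> E n) : Prop :=
  0 < L /\ C1_with_gradient nrm dnorm f gf /\
  forall x y, dnorm (vsub (gf x) (gf y)) <= L * nrm (vsub x y).

Definition is_minimizer {n} (f : E n -> R) (xs : E n) : Prop :=
  forall x, f xs <= f x.

Definition weakly_quasi_convex {n} (gamma : R) (f : E n -> R) (gf : E n -> E n) (xs : E n) : Prop :=
  0 < gamma <= 1 /\ is_minimizer f xs /\
  forall x, gamma * (f x - f xs) <= pair (gf x) (vsub x xs).

Fixpoint psi {n} (d : E n -> R) (gd : E n -> E n) (f : E n -> R) (gf : E n -> E n)
  (x0 : E n) (a : nat -> R) (y : nat -> E n) (k : nat) (z : E n) : R :=
  match k with
  | O => bregman d gd z x0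
  | S j => psi d gd f gf x0 a y j z + a (S j) * (f (y j) + pair (gf (y j)) (vsub z (y j)))
  end.

Definition line_search_step {n} (f : E n -> R) (x v y : nat -> E n) (beta : nat -> R) (k : nat) : Prop :=
  0 <= beta k <= 1 /\
  (forall b, 0 <= b <= 1 ->
     f (vadd (v k) (vscal (beta k) (vsub (x k) (v k)))) <=
     f (vadd (v k) (vscal b (vsub (x k) (v k))))) /\
  y k = vadd (v k) (vscal (beta k) (vsub (x k) (v k))).

Definition option_a_step {n} (nrm : E n -> R) (L : R) (f : E n -> R) (gf : E n -> E n)
  (x y : nat -> E n) (A a : nat -> R) (k : nat) : Prop :=
  (forall z, f (y k) + pair (gf (y k)) (vsub (x (S k)) (y k)) + L / 2 * (nrm (vsub (x (S k)) (y k))) ^ 2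
             <= f (y k) + pair (gf (y k)) (vsub z (y k)) + L / 2 * (nrm (vsub z (y k))) ^ 2) /\
  0 < a (S k) /\ (a (S k)) ^ 2 / (A k + a (S k)) = / L.

(* a solves the equation of option (b) (with A_k + a <> 0 so the fraction makes sense) *)
Definition option_b_eq {n} (dnorm : E n -> R) (f : E n -> R) (gf : E n -> E n)
  (yk xk1 : E n) (Ak a : R) : Prop :=
  Ak + a <> 0 /\ f yk - a ^ 2 / (2 * (Ak + a)) * (dnorm (gf yk)) ^ 2 = f xk1.

Definition option_b_step {n} (dnorm : E n -> R) (sharp : E n -> E n) (f : E n -> R) (gf : E n -> E n)
  (x y : nat -> E n) (A a h : nat -> R) (k : nat) : Prop :=
  0 <= h (S k) /\
  (forall t, 0 <= t ->
     f (vsub (y k) (vscal (h (S k)) (sharp (gf (y k))))) <= f (vsub (y k) (vscal t (sharp (gf (y k)))))) /\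
  x (S k) = vsub (y k) (vscal (h (S k)) (sharp (gf (y k)))) /\
  option_b_eq dnorm f gf (y k) (x (S k)) (A k) (a (S k)) /\
  (forall a', option_b_eq dnorm f gf (y k) (x (S k)) (A k) a' -> a' <= a (S k)).

Definition update_step {n} (d : E n -> R) (gd : E n -> E n) (f : E n -> R) (gf : E n -> E n)
  (x0 : E n) (v y : nat -> E n) (A a : nat -> R) (k : nat) : Prop :=
  A (S k) = A k + a (S k) /\
  (forall z, psi d gd f gf x0 a y (S k) (v (S k)) <= psi d gd f gf x0 a y (S k) z).

(* Main.v *)
Require Import Defs.
From Stdlib Require Import Reals Lra Lia FunctionalExtensionality.
From mathcomp Require ssreflect ssrbool ssrnat fintype bigop.
Open Scope R_scope.

Module Aux.
Import ssreflect ssrbool ssrnat fintype bigop.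
Open Scope R_scope.
Lemma bigR_add (I : Type) (r : seq.seq I) (F G : I -> R) :
  \big[Rplus/0]_(i <- r) (F i + G i) = \big[Rplus/0]_(i <- r) F i + \big[Rplus/0]_(i <- r) G i.
Proof. elim: r => [|x r IH]; rewrite ?big_nil ?big_cons; [ring| rewrite IH; ring]. Qed.
Lemma bigR_scal (I : Type) (r : seq.seq I) c (F : I -> R) :
  \big[Rplus/0]_(i <- r) (c * F i) = c * \big[Rplus/0]_(i <- r) F i.
Proof. elim: r => [|x r IH]; rewrite ?big_nil ?big_cons; [ring| rewrite IH; ring]. Qed.
Lemma pair_addr n (g x y : E n) : pair g (vadd x y) = pair g x + pair g y.
Proof. rewrite /pair -bigR_add; apply: eq_bigr => i _; rewrite /vadd; ring. Qed.
Lemma pair_scalr n (g x : E n) c : pair g (vscal c x) = c * pair g x.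
Proof. rewrite /pair -bigR_scal; apply: eq_bigr => i _; rewrite /vscal; ring. Qed.
Lemma pair_subr n (g x y : E n) : pair g (vsub x y) = pair g x - pair g y.
Proof.
have -> : pair g x - pair g y = pair g x + (-1) * pair g y by ring.
rewrite /pair -bigR_scal -bigR_add; apply: eq_bigr => i _; rewrite /vsub; ring. Qed.
Lemma pair_addl n (g h x : E n) : pair (vadd g h) x = pair g x + pair h x.
Proof. rewrite /pair -bigR_add; apply: eq_bigr => i _; rewrite /vadd; ring. Qed.
Lemma pair_scall n (g x : E n) c : pair (vscal c g) x = c * pair g x.
Proof. rewrite /pair -bigR_scal; apply: eq_bigr => i _; rewrite /vscal; ring. Qed.
Lemma pair_subl n (g h x : E n) : pair (vsub g h) x = pair g x - pair h x.
Proof.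
have -> : pair g x - pair h x = pair g x + (-1) * pair h x by ring.
rewrite /pair -bigR_scal -bigR_add; apply: eq_bigr => i _; rewrite /vsub; ring. Qed.
Lemma pair_zero n (g x : E n) : (forall i, x i = 0) -> pair g x = 0.
Proof.
move=> H. have -> : x = vscal 0 x by apply: functional_extensionality => i; rewrite /vscal H; ring.
rewrite pair_scalr; ring. Qed.
End Aux.
Import Aux.

Lemma vext n (u w : E n) : (forall i, u i = w i) -> u = w.
Proof. intros; apply functional_extensionality; auto. Qed.

Lemma nrm_scal0 n (nrm : E n -> R) z : is_norm nrm -> nrm (vscal 0 z) = 0.
Proof. intros (_&_&Hs&_). rewrite Hs, Rabs_R0; ring. Qed.

Lemma dnorm_nonneg n (nrm dnorm : E n -> R) g :
  is_norm nrm -> is_dual_norm nrm dnorm -> 0 <= dnorm g.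
Proof.
  intros Hn Hd. destruct (Hd g) as [_ H2].
  specialize (H2 (vscal 0 g)). rewrite pair_scalr in H2.
  rewrite nrm_scal0 in H2 by auto. lra.
Qed.

Lemma dual_ineq n (nrm dnorm : E n -> R) g u :
  is_norm nrm -> is_dual_norm nrm dnorm -> pair g u <= dnorm g * nrm u.
Proof.
  intros Hn Hd. pose proof (dnorm_nonneg _ _ _ g Hn Hd) as Hg.
  destruct Hn as (Hnn & H0 & Hs & _).
  destruct (Req_dec (nrm u) 0) as [Hz|Hz].
  - rewrite (pair_zero _ g u (H0 u Hz)), Hz; lra.
  - assert (Hp : 0 < nrm u) by (specialize (Hnn u); lra).
    destruct (Hd g) as [_ H2]. specialize (H2 (vscal (/ nrm u) u)).
    rewrite pair_scalr, Hs, Rabs_right in H2 by (apply Rle_ge; left; apply Rinv_0_lt_compat; auto).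
    rewrite Rinv_l in H2 by lra.
    assert (H3 : / nrm u * pair g u <= dnorm g) by (apply H2; lra).
    apply Rmult_le_compat_r with (r := nrm u) in H3; [|lra].
    replace (/ nrm u * pair g u * nrm u) with (pair g u) in H3 by (field; lra). lra.
Qed.

Lemma dual_ineq' n (nrm dnorm : E n -> R) g u :
  is_norm nrm -> is_dual_norm nrm dnorm -> - pair g u <= dnorm g * nrm u.
Proof.
  intros Hn Hd. pose proof (dual_ineq _ _ _ g (vscal (-1) u) Hn Hd) as H.
  rewrite pair_scalr in H. destruct Hn as (_&_&Hs&_). rewrite Hs in H.
  rewrite Rabs_left in H by lra. lra.
Qed.

Lemma line_deriv n (nrm : E n -> R) f g p h c :
  is_norm nrm -> has_gradient nrm f g ->
  derivable_pt_lim (fun t => f (vadd p (vscal t h))) c (pair (g (vadd p (vscal c h))) h).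
Proof.
  intros Hn Hg eps Heps.
  set (q := vadd p (vscal c h)). set (N := nrm h).
  assert (HN : 0 <= N) by (destruct Hn as (Hnn&_); apply Hnn).
  destruct (Hg q (eps / (2 * (N + 1)))) as (delta & Hdel & Hb).
  { apply Rdiv_lt_0_compat; lra. }
  assert (Hd' : 0 < delta / (N + 1)) by (apply Rdiv_lt_0_compat; lra).
  exists (mkposreal _ Hd'). simpl. intros hh Hhh Hlt.
  assert (Eq : vadd p (vscal (c + hh) h) = vadd q (vscal hh h)).
  { apply vext; intro i; unfold q, vadd, vscal; ring. }
  rewrite Eq. fold q.
  destruct Hn as (Hnn & _ & Hs & _).
  assert (Hnr : nrm (vscal hh h) = Rabs hh * N) by (rewrite Hs; reflexivity).
  assert (Hah : 0 < Rabs hh) by (apply Rabs_pos_lt; auto).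
  assert (Hlt2 : nrm (vscal hh h) < delta).
  { rewrite Hnr. apply Rmult_lt_compat_r with (r := N + 1) in Hlt; [|lra].
    replace (delta / (N + 1) * (N + 1)) with delta in Hlt by (field; lra). nra. }
  specialize (Hb _ Hlt2). rewrite pair_scalr, Hnr in Hb.
  replace ((f (vadd q (vscal hh h)) - f q) / hh - pair (g q) h)
    with ((f (vadd q (vscal hh h)) - f q - hh * pair (g q) h) / hh) by (field; auto).
  unfold Rdiv at 1. rewrite Rabs_mult, Rabs_inv.
  apply Rmult_le_compat_r with (r := / Rabs hh) in Hb; [|left; apply Rinv_0_lt_compat; auto].
  eapply Rle_lt_trans; [exact Hb|].
  replace (eps / (2 * (N + 1)) * (Rabs hh * N) * / Rabs hh) with (eps * (N / (2 * (N+1)))) by (field; lra).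
  assert (N / (2 * (N + 1)) < 1).
  { apply (Rmult_lt_reg_r (2 * (N+1))); [lra|]. unfold Rdiv. rewrite Rmult_assoc, Rinv_l by lra. lra. }
  assert (0 <= N / (2 * (N + 1))) by (unfold Rdiv; apply Rmult_le_pos; [lra|left; apply Rinv_0_lt_compat; lra]).
  nra.
Qed.

Lemma descent n (nrm dnorm : E n -> R) L f gf p h :
  is_norm nrm -> is_dual_norm nrm dnorm -> L_smooth nrm dnorm L f gf ->
  f (vadd p h) <= f p + pair (gf p) h + L / 2 * nrm h ^ 2.
Proof.
  intros Hn Hd (HL & (Hg & _) & Hlip).
  set (P := pair (gf p) h). set (N := nrm h). set (K := L / 2 * N ^ 2).
  set (F := fun t => f (vadd p (vscal t h))).
  assert (HN : 0 <= N) by (destruct Hn as (Hnn&_); apply Hnn).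
  assert (Hder : forall c, 0 <= c <= 1 -> derivable_pt_lim (fun t => F t - (P * t + K * (t * t))) c
             (pair (gf (vadd p (vscal c h))) h - (P * 1 + K * (1 * c + c * 1)))).
  { intros c _. apply (derivable_pt_lim_minus F (fun t => P * t + K * (t * t))).
    - apply (line_deriv _ nrm); auto.
    - apply (derivable_pt_lim_plus (fun t => P * t) (fun t => K * (t * t))).
      + apply (derivable_pt_lim_scal Ranalysis1.id). apply derivable_pt_lim_id.
      + apply (derivable_pt_lim_scal (fun t => t * t)).
        apply (derivable_pt_lim_mult Ranalysis1.id Ranalysis1.id); apply derivable_pt_lim_id. }
  destruct (MVT_cor2 _ _ 0 1 Rlt_0_1 Hder) as (c & Heq & Hc).
  assert (E0 : F 0 = f p) by (unfold F; f_equal; apply vext; intro i; unfold vadd, vscal; ring).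
  assert (E1 : F 1 = f (vadd p h)) by (unfold F; f_equal; apply vext; intro i; unfold vadd, vscal; ring).
  set (q := vadd p (vscal c h)) in *.
  assert (Hb : pair (gf q) h - P <= L * c * N * N).
  { unfold P. rewrite <- pair_subl.
    eapply Rle_trans; [apply (dual_ineq _ _ _ _ _ Hn Hd)|].
    apply Rmult_le_compat_r; [auto|].
    eapply Rle_trans; [apply Hlip|].
    replace (vsub q p) with (vscal c h) by (apply vext; intro i; unfold q, vsub, vadd, vscal; ring).
    destruct Hn as (_&_&Hs&_). rewrite Hs, Rabs_right by lra. unfold N; lra. }
  rewrite E0, E1 in Heq. unfold K in *. simpl in *. nra.
Qed.

Lemma dirderiv n (nrm : E n -> R) f g p u c d0 :
  is_norm nrm -> has_gradient nrm f g -> 0 < d0 ->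
  (forall t, 0 < t <= d0 -> 0 <= f (vadd p (vscal t u)) - f p + t * c) ->
  0 <= pair (g p) u + c.
Proof.
  intros Hn Hg Hd0 H.
  destruct (Rle_lt_dec 0 (pair (g p) u + c)) as [Hok|Hneg]; [auto|exfalso].
  set (m := - (pair (g p) u + c)). set (N := nrm u).
  assert (HN : 0 <= N) by (destruct Hn as (Hnn&_); apply Hnn).
  assert (Hm : 0 < m) by (unfold m; lra).
  destruct (Hg p (m / (2 * (N + 1)))) as (delta & Hdel & Hb).
  { apply Rdiv_lt_0_compat; lra. }
  set (t := Rmin d0 (delta / (2 * (N + 1)))).
  assert (Ht0 : 0 < t) by (apply Rmin_pos; auto; apply Rdiv_lt_0_compat; lra).
  assert (Ht1 : t <= d0) by apply Rmin_l.
  assert (Ht2 : t <= delta / (2 * (N + 1))) by apply Rmin_r.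
  destruct Hn as (Hnn & _ & Hs & _).
  assert (Hnr : nrm (vscal t u) = t * N) by (rewrite Hs, Rabs_right by lra; reflexivity).
  assert (Ht2' : t * (2 * (N + 1)) <= delta).
  { apply Rmult_le_compat_r with (r := 2 * (N+1)) in Ht2; [|lra].
    replace (delta / (2 * (N + 1)) * (2 * (N + 1))) with delta in Ht2 by (field; lra). lra. }
  assert (Hlt : nrm (vscal t u) < delta) by (rewrite Hnr; nra).
  specialize (Hb _ Hlt). rewrite pair_scalr, Hnr in Hb.
  specialize (H t (conj Ht0 Ht1)).
  pose proof (Rle_trans _ _ _ (Rle_abs _) Hb) as Hb'. clear Hb. rename Hb' into Hb.
  assert (Hmm : m / (2 * (N + 1)) * N <= m / 2).
  { replace (m / (2 * (N + 1)) * N) with (m / 2 * (N / (N+1))) by (field; lra).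
    assert (N / (N+1) <= 1).
    { apply (Rmult_le_reg_r (N+1)); [lra|]. unfold Rdiv. rewrite Rmult_assoc, Rinv_l by lra. lra. }
    assert (0 <= N / (N + 1)) by (unfold Rdiv; apply Rmult_le_pos; [lra|left; apply Rinv_0_lt_compat; lra]).
    nra. }
  unfold m in *. nra.
Qed.

Lemma psi_diff n (d : E n -> R) gd f gf x0 a y k :
  exists C, forall z w, psi d gd f gf x0 a y k z - psi d gd f gf x0 a y k w
                        = d z - d w + pair C z - pair C w.
Proof.
  induction k as [|k [C IH]].
  - exists (vscal (-1) (gd x0)). intros z w. simpl. unfold bregman.
    rewrite !pair_subr, !pair_scall. ring.
  - exists (vadd C (vscal (a (S k)) (gf (y k)))). intros z w. simpl.
    rewrite !pair_subr, !pair_addl, !pair_scall.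
    replace (psi d gd f gf x0 a y k z + a (S k) * (f (y k) + (pair (gf (y k)) z - pair (gf (y k)) (y k))) -
      (psi d gd f gf x0 a y k w + a (S k) * (f (y k) + (pair (gf (y k)) w - pair (gf (y k)) (y k)))))
      with ((psi d gd f gf x0 a y k z - psi d gd f gf x0 a y k w) + a (S k) * (pair (gf (y k)) z - pair (gf (y k)) w)) by ring.
    rewrite IH. ring.
Qed.

Lemma strong_min n (nrm dnorm : E n -> R) d gd f gf x0 a y k v :
  is_norm nrm -> prox_function nrm dnorm d gd ->
  (forall z, psi d gd f gf x0 a y k v <= psi d gd f gf x0 a y k z) ->
  forall z, psi d gd f gf x0 a y k v + / 2 * nrm (vsub z v) ^ 2 <= psi d gd f gf x0 a y k z.
Proof.
  intros Hn ((Hg & _) & _ & Hsc & _) Hmin z.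
  destruct (psi_diff n d gd f gf x0 a y k) as [C HC].
  assert (Hdd : 0 <= pair (gd v) (vsub z v) + pair C (vsub z v)).
  { eapply (dirderiv n nrm d gd v (vsub z v) (pair C (vsub z v)) 1); auto; [lra|].
    intros t Ht. pose proof (Hmin (vadd v (vscal t (vsub z v)))) as H.
    pose proof (HC (vadd v (vscal t (vsub z v))) v) as H2.
    rewrite pair_addr, pair_scalr in H2. lra. }
  pose proof (HC z v) as H1. pose proof (Hsc v z) as H3.
  rewrite !pair_subr in Hdd. rewrite !pair_subr in H3. lra.
Qed.

Theorem mainTheorem3
  (n : nat) (nrm dnorm : E n -> R) (sharp : E n -> E n)
  (Hnorm : is_norm nrm) (Hdual : is_dual_norm nrm dnorm) (Hsharp : is_sharp nrm dnorm sharp)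
  (d : E n -> R) (gd : E n -> E n) (Hd : prox_function nrm dnorm d gd)
  (f : E n -> R) (gf : E n -> E n) (L gamma : R) (xs : E n)
  (Hsmooth : L_smooth nrm dnorm L f gf)
  (Hwqc : weakly_quasi_convex gamma f gf xs)
  (optA : bool)
  (x v y : nat -> E n) (A a beta h : nat -> R)
  (HA0 : A 0%nat = 0) (Hv0 : v 0%nat = x 0%nat)
  (Hls : forall k, line_search_step f x v y beta k)
  (Hstep : forall k, gf (y k) <> vzero ->
     (if optA then option_a_step nrm L f gf x y A a k
      else option_b_step dnorm sharp f gf x y A a h k) /\
     update_step d gd f gf (x 0%nat) v y A a k) :
  forall k : nat, (forall j, (j < k)%nat -> gf (y j) <> vzero) ->
    A k * (f (x k) - f xs) <=
    (1 - gamma) * A k * (f (x 0%nat) - f xs) + bregman d gd xs (x 0%nat).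
Proof.
  set (Psi := psi d gd f gf (x 0%nat) a y).
  destruct Hwqc as (Hgam & Hmin_xs & Hwq).
  assert (Hgrad : has_gradient nrm f gf) by (destruct Hsmooth as (_ & (H & _) & _); exact H).
  assert (Inv : forall k, (forall j, (j < k)%nat -> gf (y j) <> vzero) ->
    0 <= A k /\ f (x k) <= f (x 0%nat) /\ A k * f (x k) <= Psi k (v k) /\
    Psi k xs <= bregman d gd xs (x 0%nat) + A k * ((1 - gamma) * f (x 0%nat) + gamma * f xs) /\
    (forall z, Psi k (v k) + / 2 * nrm (vsub z (v k)) ^ 2 <= Psi k z)).
  { induction k as [|k IH]; intros Hj.
    - rewrite HA0, Hv0. unfold Psi; cbn [psi]. unfold bregman. rewrite !pair_subr.
      split; [lra|]. split; [lra|]. split; [lra|]. split; [lra|].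
      intros z. destruct Hd as (_ & _ & Hsc & _). pose proof (Hsc (x 0%nat) z) as H.
      rewrite !pair_subr in H |- *. lra.
    - destruct IH as (HAk & Hfx & HPv & HPxs & Hstr).
      { intros j Hjk. apply Hj. lia. }
      assert (Hg0 : gf (y k) <> vzero) by (apply Hj; lia).
      destruct (Hstep k Hg0) as [Hopt [HAs Hminv]].
      destruct (Hls k) as (Hb & Hmls & Hy).
      set (g := gf (y k)) in *. set (G := dnorm g). set (al := a (S k)).
      assert (HG : 0 <= G) by (apply (dnorm_nonneg n nrm); auto).
      assert (F1 : f (y k) <= f (x k)).
      { pose proof (Hmls 1 ltac:(lra)) as H. rewrite <- Hy in H.
        replace (vadd (v k) (vscal 1 (vsub (x k) (v k)))) with (x k) in H; auto.
        apply vext; intro i; unfold vadd, vscal, vsub; ring. }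
      assert (F2 : 0 <= pair g (vsub (v k) (y k))).
      { assert (Hp : 0 < beta k -> 0 <= pair g (vsub (v k) (x k))).
        { intros Hbp.
          assert (H := dirderiv n nrm f gf (y k) (vsub (v k) (x k)) 0 (beta k) Hnorm Hgrad Hbp).
          fold g in H. rewrite Rplus_0_r in H. apply H.
          intros t Ht. rewrite Rmult_0_r, Rplus_0_r.
          replace (vadd (y k) (vscal t (vsub (v k) (x k)))) with
            (vadd (v k) (vscal (beta k - t) (vsub (x k) (v k)))).
          2:{ rewrite Hy. apply vext; intro i; unfold vadd, vscal, vsub; ring. }
          rewrite Hy. pose proof (Hmls (beta k - t) ltac:(lra)). lra. }
        rewrite Hy, !pair_subr, pair_addr, pair_scalr, !pair_subr.
        rewrite !pair_subr in Hp.
        destruct (Req_dec (beta k) 0) as [H0|H0].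
        + rewrite H0. lra.
        + assert (0 < beta k) by lra. specialize (Hp H). nra. }
      assert (Hopt' : 0 <= al /\ (A k + al) * f (x (S k)) <= (A k + al) * f (y k) - al ^ 2 * G ^ 2 / 2
                      /\ f (x (S k)) <= f (y k)).
      { destruct optA.
        - destruct Hopt as (Hma & Hal & Heq). fold g al in Hma, Hal, Heq.
          assert (HL : 0 < L) by (destruct Hsmooth; auto).
          assert (HA' : 0 < A k + al) by lra.
          assert (Hal2 : al ^ 2 = (A k + al) / L).
          { replace (al ^ 2) with (al ^ 2 / (A k + al) * (A k + al)) by (field; lra).
            rewrite Heq. field. lra. }
          assert (Hdesc : f (x (S k)) <= f (y k) - G ^ 2 / (2 * L)).
          { pose proof (descent n nrm dnorm L f gf (y k) (vsub (x (S k)) (y k)) Hnorm Hdual Hsmooth) as H.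
            replace (vadd (y k) (vsub (x (S k)) (y k))) with (x (S k)) in H
              by (apply vext; intro i; unfold vadd, vsub; ring).
            fold g in H.
            set (s := sharp g). set (z := vsub (y k) (vscal (G / L) s)).
            specialize (Hma z).
            replace (vsub z (y k)) with (vscal (- (G / L)) s) in Hma
              by (apply vext; intro i; unfold z, vsub, vscal; ring).
            destruct (Hsharp g) as [Hs1 Hs2]. fold s G in Hs1, Hs2.
            destruct Hnorm as (Hnn & _ & Hsc & _).
            rewrite pair_scalr, Hs2, Hsc in Hma.
            rewrite Rabs_left1 in Hma.
            2:{ assert (0 <= G / L) by (unfold Rdiv; apply Rmult_le_pos; [lra|left; apply Rinv_0_lt_compat; lra]). lra. }
            assert (Hn1 : 0 <= nrm s) by apply Hnn.
            assert (HGL : 0 <= G / L) by (unfold Rdiv; apply Rmult_le_pos; [lra|left; apply Rinv_0_lt_compat; lra]).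
            assert (Hq : (- - (G / L) * nrm s) ^ 2 <= (G / L) ^ 2).
            { replace (- - (G / L)) with (G / L) by ring. rewrite Rpow_mult_distr.
              assert (nrm s ^ 2 <= 1) by nra. nra. }
            assert (Hx : L / 2 * (- - (G / L) * nrm s) ^ 2 <= L / 2 * (G / L) ^ 2)
              by (apply Rmult_le_compat_l; lra).
            replace (f (y k) - G ^ 2 / (2 * L)) with (f (y k) + - (G / L) * G + L / 2 * (G / L) ^ 2)
              by (field; lra).
            lra. }
          split; [lra|]. split.
          + assert (Hm : (A k + al) * (G ^ 2 / (2 * L)) = al ^ 2 * G ^ 2 / 2)
              by (rewrite Hal2; field; lra).
            apply Rmult_le_compat_l with (r := A k + al) in Hdesc; [|lra]. nra.
          + assert (0 <= G ^ 2 / (2 * L)) by (unfold Rdiv; apply Rmult_le_pos; [nra|left; apply Rinv_0_lt_compat; lra]).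
            lra.
        - destruct Hopt as (Hh & Hmb & Hx1 & (Hne & Heqb) & Hmax). fold g al G in Hmb, Hx1, Hne, Heqb, Hmax.
          assert (Hdl : f (x (S k)) <= f (y k)).
          { rewrite Hx1. pose proof (Hmb 0 ltac:(lra)) as H.
            replace (vsub (y k) (vscal 0 (sharp g))) with (y k) in H; auto.
            apply vext; intro i; unfold vsub, vscal; ring. }
          assert (HE : (A k + al) * f (x (S k)) = (A k + al) * f (y k) - al ^ 2 * G ^ 2 / 2).
          { rewrite <- Heqb. field. auto. }
          split; [|split; lra].
          destruct (Rle_lt_dec 0 al) as [Hok|Hneg]; [auto|exfalso].
          assert (HG2 : 0 <= G ^ 2) by nra.
          destruct (Req_dec (G ^ 2) 0) as [HG0|HG0].
          + assert (Hq : option_b_eq dnorm f gf (y k) (x (S k)) (A k) (1 - al)).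
            { split; [lra|]. fold g G. rewrite <- Heqb, HG0. field. split; lra. }
            specialize (Hmax _ Hq). lra.
          + set (De := f (y k) - f (x (S k))).
            assert (Hpoly : al ^ 2 * G ^ 2 = 2 * De * (A k + al)).
            { unfold De. rewrite <- Heqb. field. auto. }
            assert (HGn : G <> 0) by (intro Hz; apply HG0; rewrite Hz; ring).
            set (sg := 2 * De / G ^ 2).
            assert (Hsg : sg * G ^ 2 = 2 * De) by (unfold sg; field; auto).
            assert (Hsg0 : 0 <= sg).
            { unfold sg, Rdiv. apply Rmult_le_pos; [unfold De; lra|left; apply Rinv_0_lt_compat; lra]. }
            set (a2 := sg - al).
            assert (Hp2 : a2 ^ 2 * G ^ 2 = 2 * De * (A k + a2)).
            { unfold a2. replace ((sg - al) ^ 2 * G ^ 2) with (sg * (sg * G ^ 2) - 2 * al * (sg * G ^ 2) + al ^ 2 * G ^ 2) by ring.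
              rewrite Hsg, Hpoly. ring. }
            assert (Hq : option_b_eq dnorm f gf (y k) (x (S k)) (A k) a2).
            { split; [unfold a2; lra|]. fold g G.
              replace (a2 ^ 2 / (2 * (A k + a2)) * G ^ 2) with (a2 ^ 2 * G ^ 2 / (2 * (A k + a2)))
                by (field; unfold a2; lra).
              rewrite Hp2. unfold De. field. unfold a2; lra. }
            specialize (Hmax _ Hq). unfold a2 in Hmax. lra. }
      destruct Hopt' as (Hal0 & HAf & Hfy).
      assert (Key : forall z, (A k + al) * f (y k) - al ^ 2 * G ^ 2 / 2 <= Psi (S k) z).
      { intros z. unfold Psi; cbn [psi]; fold Psi. fold g al.
        pose proof (Hstr z) as H1.
        assert (Hsp : pair g (vsub z (y k)) = pair g (vsub z (v k)) + pair g (vsub (v k) (y k)))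
          by (rewrite !pair_subr; ring).
        pose proof (dual_ineq' n nrm dnorm g (vsub z (v k)) Hnorm Hdual) as H2. fold G in H2.
        set (N := nrm (vsub z (v k))) in *.
        assert (HN : 0 <= N) by (destruct Hnorm as (Hnn&_); apply Hnn).
        rewrite Hsp.
        assert (H3 : A k * f (y k) <= A k * f (x k)) by (apply Rmult_le_compat_l; auto).
        assert (H4 : 0 <= al * pair g (vsub (v k) (y k))) by (apply Rmult_le_pos; auto).
        assert (H5 : - (al * G * N) <= al * pair g (vsub z (v k))).
        { assert (al * - pair g (vsub z (v k)) <= al * (G * N)) by (apply Rmult_le_compat_l; auto). nra. }
        assert (H6 : 0 <= (N - al * G) ^ 2) by apply pow2_ge_0.
        assert (H7 : / 2 * N ^ 2 - al * G * N >= - (al ^ 2 * G ^ 2 / 2)) by nra.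
        lra. }
      split; [rewrite HAs; fold al; lra|]. split; [lra|]. split.
      { rewrite HAs. fold al. pose proof (Key (v (S k))) as KK. lra. }
      split.
      { unfold Psi; cbn [psi]; fold Psi. rewrite HAs. fold g al.
        pose proof (Hwq (y k)) as Hw. fold g in Hw.
        rewrite pair_subr in Hw. rewrite pair_subr.
        assert (Hb2 : f (y k) + (pair g xs - pair g (y k)) <= (1 - gamma) * f (x 0%nat) + gamma * f xs).
        { assert ((1 - gamma) * f (y k) <= (1 - gamma) * f (x 0%nat)) by (apply Rmult_le_compat_l; lra).
          lra. }
        apply Rmult_le_compat_l with (r := al) in Hb2; auto. nra. }
      intros z. apply (strong_min n nrm dnorm); auto. }
  intros k Hj. destruct (Inv k Hj) as (HAk & _ & HPv & HPxs & Hstr).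
  pose proof (Hstr xs) as H. nra.
Qed.
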